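(* Let $G$ be a connected bipartite graph with $G\not\cong K_2$. Then $\chi'_{2}(\overleftrightarrow{G}) = \chi'_{1,2}(\overleftrightarrow{G})$.
   Context: For a simple graph $G$, the symmetric digraph $\overleftrightarrow{G}$ is obtained by replacing each edge $uv$ of $G$ by the pair of opposite arcs $\overrightarrow{uv}$ and $\overrightarrow{vu}$. A monochromatic 2-path is a pair of arcs $\overrightarrow{uv},\overrightarrow{vw}$ with $w\neq u$ of the same colour; a monochromatic 2-cycle is a pair $\overrightarrow{uv},\overrightarrow{vu}$ of the same colour. $\chi'_{1,2}(\overleftrightarrow{G})$ is the least number of colours in an arc-colouring of $\overleftrightarrow{G}$ with no monochromatic 2-cycles and no monochromatic 2-paths; $\chi'_{2}(\overleftrightarrow{G})$ is the least number of colours in an arc-colouring of $\overleftrightarrow{G}$ with no monochromatic 2-paths (monochromatic 2-cycles allowed). *)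

(* Defs.v *)
From mathcomp Require Import all_boot.
Set Implicit Arguments. Unset Strict Implicit. Unset Printing Implicit Defensive.

Record sgraph (T : finType) := SGraph {
  adj : rel T;
  adj_sym : symmetric adj;
  adj_irr : irreflexive adj }.

Section Defs.
Variables (T : finType) (G : sgraph T).

Definition connected_graph : Prop := forall x y : T, connect (adj G) x y.

Definition bipartite : Prop :=
  exists A : {set T}, forall x y, adj G x y -> (x \in A) != (y \in A).

Definition iso_K2 : Prop :=
  exists f : T -> 'I_2, bijective f /\ forall x y, adj G x y = (f x != f y).

(* An arc colouring of the symmetric digraph with k colours: a colour for
   every ordered pair (u,v); only pairs with adj G u v (arcs) matter. *)
Definition no_mono_2path k (c : {ffun T * T -> 'I_k}) : bool :=
  [forall u, forall v, forall w,
     [&& adj G u v, adj G v w & w != u] ==> (c (u, v) != c (v, w))].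

Definition no_mono_2cycle k (c : {ffun T * T -> 'I_k}) : bool :=
  [forall u, forall v, adj G u v ==> (c (u, v) != c (v, u))].

Definition col2 (k : nat) : bool :=
  [exists c : {ffun T * T -> 'I_k}, no_mono_2path c].

Definition col12 (k : nat) : bool :=
  [exists c : {ffun T * T -> 'I_k}, no_mono_2path c && no_mono_2cycle c].

Lemma col12_exists : exists k, col12 k.
Proof.
exists #|{: T * T}|; apply/existsP.
exists [ffun p => enum_rank p]; apply/andP; split.
- apply/forallP => u; apply/forallP => v; apply/forallP => w.
  apply/implyP => /and3P [huv _ _]; rewrite !ffunE.
  apply/negP => /eqP /enum_rank_inj [Euv _].
  by move: huv; rewrite Euv adj_irr.
- apply/forallP => u; apply/forallP => v; apply/implyP => huv; rewrite !ffunE.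
  apply/negP => /eqP /enum_rank_inj [Euv _].
  by move: huv; rewrite Euv adj_irr.
Qed.

Lemma col2_exists : exists k, col2 k.
Proof.
have [k /existsP [c /andP [h _]]] := col12_exists.
by exists k; apply/existsP; exists c.
Qed.

Definition chi2 : nat := ex_minn col2_exists.
Definition chi12 : nat := ex_minn col12_exists.

End Defs.

(* Main.v *)
Require Import Defs.
From mathcomp Require Import all_boot.
Set Implicit Arguments. Unset Strict Implicit.

Lemma col12_col2 (T : finType) (G : sgraph T) k : col12 G k -> col2 G k.
Proof. by case/existsP => c /andP [h _]; apply/existsP; exists c. Qed.

Lemma col2_col12_noedge (T : finType) (G : sgraph T) k :
  (forall x y, ~~ adj G x y) -> col2 G k -> col12 G k.
Proof.
move=> H /existsP [c h]; apply/existsP; exists c; rewrite h /=.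
by apply/forallP => u; apply/forallP => v; rewrite (negbTE (H u v)).
Qed.

Lemma chi2_le12 (T : finType) (G : sgraph T) : chi2 G <= chi12 G.
Proof.
rewrite /chi2 /chi12; case: ex_minnP => m Hm Hmin.
case: ex_minnP => n Hn _; apply: Hmin; exact: col12_col2 Hn.
Qed.

Lemma chi12_le2 (T : finType) (G : sgraph T) : bipartite G -> chi12 G <= 2.
Proof.
case=> A HA; rewrite /chi12; case: ex_minnP => m _ Hmin; apply: Hmin.
apply/existsP; exists [ffun p : T * T => if p.1 \in A then (ord0 : 'I_2) else ord_max].
apply/andP; split.
- apply/forallP => u; apply/forallP => v; apply/forallP => w.
  apply/implyP => /and3P [huv _ _]; rewrite !ffunE /=.
  by move: (HA _ _ huv); case: (u \in A); case: (v \in A).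
- apply/forallP => u; apply/forallP => v; apply/implyP => huv; rewrite !ffunE /=.
  by move: (HA _ _ huv); case: (u \in A); case: (v \in A).
Qed.

Lemma chi2_ge2 (T : finType) (G : sgraph T) u v w :
  adj G u v -> adj G v w -> w != u -> 2 <= chi2 G.
Proof.
move=> huv hvw hwu; rewrite /chi2; case: ex_minnP => m Hm _.
rewrite leqNgt; apply/negP => hm.
case/existsP: Hm => c /forallP /(_ u) /forallP /(_ v) /forallP /(_ w).
rewrite huv hvw hwu /= => /negP; apply.
have a := ltn_ord (c (u, v)); have b := ltn_ord (c (v, w)).
apply/eqP/val_inj => /=.
move: a b; case: m hm c => [|[|]] //= _ c.
by case: (nat_of_ord (c (u,v))) => //; case: (nat_of_ord (c (v,w))).
Qed.

Theorem mainTheorem5 (T : finType) (G : sgraph T) :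
  connected_graph G -> bipartite G -> ~ iso_K2 G -> chi2 G = chi12 G.
Proof.
move=> Hc Hb Hk.
have [/existsP [x /existsP [y hxy]] | Hne] := boolP [exists x, exists y, adj G x y].
  have [/existsP [u /existsP [v /existsP [w /and3P [huv hvw hwu]]]] | Hn2] :=
    boolP [exists u, exists v, exists w, [&& adj G u v, adj G v w & w != u]].
    apply/eqP; rewrite eqn_leq chi2_le12 /=.
    have h1 := chi12_le2 Hb. have h2 := chi2_ge2 huv hvw hwu.
    exact: leq_trans h1 h2.
  have H2 : forall a b c, adj G a b -> adj G b c -> c = a.
    move=> a b c hab hbc; apply/eqP; apply: contraNT Hn2 => hca.
    by apply/existsP; exists a; apply/existsP; exists b; apply/existsP; exists c;
       rewrite hab hbc hca.
  have hxy' : x != y by apply: contraTneq hxy => ->; rewrite adj_irr.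
  have Hin : forall z, (z == x) || (z == y).
    have side : forall a b, adj G a b -> (a == x) || (a == y) -> (b == x) || (b == y).
      move=> a b hab /orP [] /eqP Ea; subst a.
        have hbx : adj G b x by rewrite adj_sym.
        by rewrite (H2 _ _ _ hbx hxy) eqxx orbT.
      have hyx : adj G y x by rewrite adj_sym.
      by rewrite (H2 _ _ _ hxy hab) eqxx.
    have Hcl : closed (adj G) (fun z => (z == x) || (z == y)).
      move=> a b hab; apply/idP/idP; first exact: side.
      by apply: side; rewrite adj_sym.
    move=> z; have := closed_connect Hcl (Hc x z).
    by rewrite /in_mem /= eqxx /= => <-.
  exfalso; apply: Hk.
  exists (fun z => if z == x then (ord0 : 'I_2) else ord_max); split.
    exists (fun i : 'I_2 => if val i == 0 then x else y).
      by move=> z; case: (eqVneq z x) => [->|hz] //=; move: (Hin z); rewrite (negbTE hz) /= => /eqP ->.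
    move=> i; case: i => [[|[|]] hi] //=; first by rewrite eqxx; apply: val_inj.
      by rewrite eq_sym (negbTE hxy'); apply: val_inj.
  have hyx : adj G y x by rewrite adj_sym.
  have hyx' : (y == x) = false by rewrite eq_sym (negbTE hxy').
  move=> a b; move: (Hin a) (Hin b) => /orP [] /eqP -> /orP [] /eqP ->;
    rewrite ?eqxx ?hyx' ?adj_irr ?hxy ?hyx //.
have H : forall x y, ~~ adj G x y.
  move=> x y; apply/negP => h; move/negP: Hne; apply.
  by apply/existsP; exists x; apply/existsP; exists y.
rewrite /chi2 /chi12; case: ex_minnP => m Hm Hmin; case: ex_minnP => n Hn Hmin'.
apply/eqP; rewrite eqn_leq (Hmin _ (col12_col2 Hn)) /=.
exact: Hmin' _ (col2_col12_noedge H Hm).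
Qed.
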